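(* Let $c\in\mathbb{R}$ with $c\neq 1$, and let $f:\mathbb{R}\to\mathbb{R}$ be a twice differentiable function satisfying $(c^2-1)f''(z)+\sin f(z)=0$. Fix $\zeta\in\mathbb{C}\setminus\{0\}$ and define $$A=-\frac{i\left(4(1+c)\zeta^2-(c-1)\cos f(z)\right)}{8\zeta},\quad B=\frac{(c-1)\left(i\sin f(z)+2(c+1)\zeta f'(z)\right)}{8\zeta},\quad \tilde B=\frac{(c-1)\left(i\sin f(z)-2(c+1)\zeta f'(z)\right)}{8\zeta},$$ $$C=-\frac{i\zeta}{2}+\frac{i\cos f(z)}{8\zeta},\quad D=\frac{i\sin f(z)}{8\zeta}+\frac{(c-1)f'(z)}{4},\quad \tilde D=\frac{i\sin f(z)}{8\zeta}-\frac{(c-1)f'(z)}{4}.$$ Let $\chi(z,\tau)=(\chi_1(z,\tau),\chi_2(z,\tau))^T$ be any simultaneous solution of $$\chi_z=\begin{pmatrix} C & D\\ \tilde D & -C\end{pmatrix}\chi,\qquad \chi_\tau=\begin{pmatrix} A & B\\ \tilde B & -A\end{pmatrix}\chi.$$ Then $w(z,\tau)=\chi_1(z,\tau)^2+\chi_2(z,\tau)^2$ satisfies $$(c^2-1)w_{zz}-2c\,w_{z\tau}+w_{\tau\tau}+\cos\left(f(z)\right)w=0.$$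
   Context: This is the Lax pair of the sine-Gordon equation $u_{tt}-u_{xx}+\sin u=0$ written in the traveling frame $z=x-ct$, $\tau=t$ and evaluated at the stationary solution $u=f(z)$; the equation for $w$ is the linearization of the traveling-frame sine-Gordon equation $(c^2-1)v_{zz}-2cv_{z\tau}+v_{\tau\tau}+\sin v=0$ about $v=f(z)$. *)

(* Defs.v *)
From Stdlib Require Import Reals.
From Coquelicot Require Import Coquelicot.
Open Scope C_scope.

Definition coefA (c : R) (zeta : C) (fz : R) : C :=
  - (Ci * (RtoC 4 * RtoC (1 + c) * zeta * zeta - RtoC (c - 1) * RtoC (cos fz)))
    / (RtoC 8 * zeta).
Definition coefB (c : R) (zeta : C) (fz dfz : R) : C :=
  RtoC (c - 1) * (Ci * RtoC (sin fz) + RtoC 2 * RtoC (c + 1) * zeta * RtoC dfz)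
    / (RtoC 8 * zeta).
Definition coefBt (c : R) (zeta : C) (fz dfz : R) : C :=
  RtoC (c - 1) * (Ci * RtoC (sin fz) - RtoC 2 * RtoC (c + 1) * zeta * RtoC dfz)
    / (RtoC 8 * zeta).
Definition coefC (zeta : C) (fz : R) : C :=
  - (Ci * zeta) / RtoC 2 + Ci * RtoC (cos fz) / (RtoC 8 * zeta).
Definition coefD (c : R) (zeta : C) (fz dfz : R) : C :=
  Ci * RtoC (sin fz) / (RtoC 8 * zeta) + RtoC (c - 1) * RtoC dfz / RtoC 4.
Definition coefDt (c : R) (zeta : C) (fz dfz : R) : C :=
  Ci * RtoC (sin fz) / (RtoC 8 * zeta) - RtoC (c - 1) * RtoC dfz / RtoC 4.

(* Main.v *)
Require Import Defs.
From Stdlib Require Import Reals Lra.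
From Coquelicot Require Import Coquelicot.
Open Scope C_scope.
Lemma lin_fst : @is_linear R_AbsRing C_R_NormedModule R_NormedModule (fun z : C => fst z).
Proof.
  split.
  - intros [a b] [c d]; reflexivity.
  - intros k [a b]; reflexivity.
  - exists 1%R; split; [lra|]. intros [a b].
    change (norm (a,b)) with (sqrt (norm a ^ 2 + norm b ^2))%R.
    simpl fst. rewrite Rmult_1_l.
    change (norm a) with (Rabs a). change (norm b) with (Rabs b).
    rewrite !pow2_abs. rewrite <- (sqrt_Rsqr_abs a). apply sqrt_le_1_alt.
    unfold Rsqr. 
    pose proof (pow2_ge_0 b). simpl in *. nra.
Qed.
Lemma lin_snd : @is_linear R_AbsRing C_R_NormedModule R_NormedModule (fun z : C => snd z).
Proof.
  split.
  - intros [a b] [c d]; reflexivity.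
  - intros k [a b]; reflexivity.
  - exists 1%R; split; [lra|]. intros [a b].
    change (norm (a,b)) with (sqrt (norm a ^ 2 + norm b ^2))%R.
    simpl snd. rewrite Rmult_1_l.
    change (norm a) with (Rabs a). change (norm b) with (Rabs b).
    rewrite !pow2_abs. rewrite <- (sqrt_Rsqr_abs b). apply sqrt_le_1_alt.
    unfold Rsqr. 
    pose proof (pow2_ge_0 a). simpl in *. nra.
Qed.

Lemma d_re (f : R -> C) x l : is_derive f x l -> is_derive (fun y => fst (f y)) x (fst l).
Proof.
  intros H. unfold is_derive in *.
  eapply filterdiff_ext_lin.
  - eapply (filterdiff_comp f (fun z : C => fst z)); [exact H|].
    apply filterdiff_linear, lin_fst.
  - intros y. reflexivity.
Qed.
Lemma d_im (f : R -> C) x l : is_derive f x l -> is_derive (fun y => snd (f y)) x (snd l).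
Proof.
  intros H. unfold is_derive in *.
  eapply filterdiff_ext_lin.
  - eapply (filterdiff_comp f (fun z : C => snd z)); [exact H|].
    apply filterdiff_linear, lin_snd.
  - intros y. reflexivity.
Qed.

Lemma decomp (z : C) : z = @plus C_R_NormedModule (@scal R_Ring C_R_ModuleSpace (fst z) (1%R,0%R)) (@scal R_Ring C_R_ModuleSpace (snd z) (0%R,1%R)).
Proof.
  destruct z as [a b]. 
  unfold plus, scal; simpl. unfold prod_plus, prod_scal; simpl.
  unfold plus, scal; simpl; unfold mult; simpl. f_equal; ring.
Qed.

Lemma d_mk (f : R -> C) x l : is_derive (fun y => fst (f y)) x (fst l) ->
  is_derive (fun y => snd (f y)) x (snd l) -> is_derive f x l.
Proof.
  intros H1 H2.
  pose proof (@is_derive_scal_l R_AbsRing C_R_NormedModule _ x _ (1%R,0%R) H1) as E1.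
  pose proof (@is_derive_scal_l R_AbsRing C_R_NormedModule _ x _ (0%R,1%R) H2) as E2.
  pose proof (is_derive_plus _ _ _ _ _ E1 E2) as E.
  rewrite (decomp l).
  eapply is_derive_ext; [|exact E].
  intros t. simpl. symmetry. apply decomp.
Qed.

Lemma dval {K : AbsRing} {V : NormedModule K} (f : K -> V) x l l' : is_derive f x l -> l = l' -> is_derive f x l'.
Proof. intros H ->; exact H. Qed.

Lemma rd_mult (f g : R -> R) x df dg : is_derive f x df -> is_derive g x dg ->
  is_derive (fun y => (f y * g y)%R) x (df * g x + f x * dg)%R.
Proof. intros. apply (Derive.is_derive_mult f g); auto. Qed.
Lemma rd_minus (f g : R -> R) x df dg : is_derive f x df -> is_derive g x dg ->
  is_derive (fun y => (f y - g y)%R) x (df - dg)%R.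
Proof. intros. apply (is_derive_minus f g); auto. Qed.
Lemma rd_plus (f g : R -> R) x df dg : is_derive f x df -> is_derive g x dg ->
  is_derive (fun y => (f y + g y)%R) x (df + dg)%R.
Proof. intros. apply (is_derive_plus f g); auto. Qed.

Lemma cd_mult (f g : R -> C) x df dg : is_derive f x df -> is_derive g x dg ->
  is_derive (fun y => f y * g y) x (df * g x + f x * dg).
Proof.
  intros Hf Hg.
  pose proof (d_re _ _ _ Hf) as F1. pose proof (d_im _ _ _ Hf) as F2.
  pose proof (d_re _ _ _ Hg) as G1. pose proof (d_im _ _ _ Hg) as G2.
  apply d_mk.
  - eapply dval.
    + eapply is_derive_ext; [|apply (rd_minus _ _ _ _ _ (rd_mult _ _ _ _ _ F1 G1) (rd_mult _ _ _ _ _ F2 G2))].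
      intros t. simpl. destruct (f t), (g t). reflexivity.
    + simpl. destruct (f x), (g x), df, dg. simpl. ring.
  - eapply dval.
    + eapply is_derive_ext; [|apply (rd_plus _ _ _ _ _ (rd_mult _ _ _ _ _ F1 G2) (rd_mult _ _ _ _ _ F2 G1))].
      intros t. simpl. destruct (f t), (g t). reflexivity.
    + simpl. destruct (f x), (g x), df, dg. simpl. ring.
Qed.

Lemma cd_plus (f g : R -> C) x df dg : is_derive f x df -> is_derive g x dg ->
  is_derive (fun y => f y + g y) x (df + dg).
Proof.
  intros Hf Hg.
  pose proof (d_re _ _ _ Hf) as F1. pose proof (d_im _ _ _ Hf) as F2.
  pose proof (d_re _ _ _ Hg) as G1. pose proof (d_im _ _ _ Hg) as G2.
  apply d_mk.
  - eapply dval.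
    + eapply is_derive_ext; [|apply (rd_plus _ _ _ _ _ F1 G1)].
      intros t. simpl. destruct (f t), (g t). reflexivity.
    + simpl. destruct df, dg. reflexivity.
  - eapply dval.
    + eapply is_derive_ext; [|apply (rd_plus _ _ _ _ _ F2 G2)].
      intros t. simpl. destruct (f t), (g t). reflexivity.
    + simpl. destruct df, dg. reflexivity.
Qed.

Lemma cd_const (k : C) x : is_derive (fun _ : R => k) x (RtoC 0).
Proof.
  apply d_mk; simpl; apply (is_derive_const (K:=R_AbsRing) (V:=R_NormedModule)).
Qed.

Lemma cd_RtoC (h : R -> R) x d : is_derive h x d -> is_derive (fun y => RtoC (h y)) x (RtoC d).
Proof.
  intros H. apply d_mk; simpl; [exact H|].
  apply (is_derive_const (K:=R_AbsRing) (V:=R_NormedModule)).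
Qed.

Lemma cd_minus (f g : R -> C) x df dg : is_derive f x df -> is_derive g x dg ->
  is_derive (fun y => f y - g y) x (df - dg).
Proof.
  intros Hf Hg.
  pose proof (d_re _ _ _ Hf) as F1. pose proof (d_im _ _ _ Hf) as F2.
  pose proof (d_re _ _ _ Hg) as G1. pose proof (d_im _ _ _ Hg) as G2.
  apply d_mk.
  - eapply dval.
    + eapply is_derive_ext; [|apply (rd_minus _ _ _ _ _ F1 G1)].
      intros t. simpl. destruct (f t), (g t). reflexivity.
    + simpl. destruct df, dg. reflexivity.
  - eapply dval.
    + eapply is_derive_ext; [|apply (rd_minus _ _ _ _ _ F2 G2)].
      intros t. simpl. destruct (f t), (g t). reflexivity.
    + simpl. destruct df, dg. reflexivity.
Qed.

Ltac compsolve :=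
  match goal with |- _ = _ => idtac end;
  unfold Cdiv, Cminus, Copp, Cmult, Cplus, Cinv, RtoC, Ci; cbn [fst snd];
  apply injective_projections; cbn [fst snd]; field.

Lemma pq_nz (p q : R) : (p, q) <> RtoC 0 -> (p*p+q*q <> 0)%R.
Proof. intros Hz H. apply Hz. assert (p = 0%R) by nra. assert (q = 0%R) by nra. subst. reflexivity. Qed.

Lemma cC zeta fz : zeta <> RtoC 0 ->
  coefC zeta fz = - (Ci*zeta) / RtoC 2 - RtoC (cos fz) / (RtoC 8 * (Ci*zeta)).
Proof. intros Hz. unfold coefC. destruct zeta as [p q]. pose proof (pq_nz _ _ Hz). compsolve; lra. Qed.
Lemma cA c zeta fz : zeta <> RtoC 0 ->
  coefA c zeta fz = - (RtoC 1 + RtoC c) * (Ci*zeta) / RtoC 2 - (RtoC c - RtoC 1) * RtoC (cos fz) / (RtoC 8 * (Ci*zeta)).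
Proof. intros Hz. unfold coefA. destruct zeta as [p q]. pose proof (pq_nz _ _ Hz). compsolve; lra. Qed.
Lemma cB c zeta fz fp : zeta <> RtoC 0 ->
  coefB c zeta fz fp = (RtoC c - RtoC 1) * (- RtoC (sin fz) / (RtoC 8 * (Ci*zeta)) + (RtoC c + RtoC 1) * RtoC fp / RtoC 4).
Proof. intros Hz. unfold coefB. destruct zeta as [p q]. pose proof (pq_nz _ _ Hz). compsolve; lra. Qed.
Lemma cBt c zeta fz fp : zeta <> RtoC 0 ->
  coefBt c zeta fz fp = (RtoC c - RtoC 1) * (- RtoC (sin fz) / (RtoC 8 * (Ci*zeta)) - (RtoC c + RtoC 1) * RtoC fp / RtoC 4).
Proof. intros Hz. unfold coefBt. destruct zeta as [p q]. pose proof (pq_nz _ _ Hz). compsolve; lra. Qed.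
Lemma cD c zeta fz fp : zeta <> RtoC 0 ->
  coefD c zeta fz fp = - RtoC (sin fz) / (RtoC 8 * (Ci*zeta)) + (RtoC c - RtoC 1) * RtoC fp / RtoC 4.
Proof. intros Hz. unfold coefD. destruct zeta as [p q]. pose proof (pq_nz _ _ Hz). compsolve; lra. Qed.
Lemma cDt c zeta fz fp : zeta <> RtoC 0 ->
  coefDt c zeta fz fp = - RtoC (sin fz) / (RtoC 8 * (Ci*zeta)) - (RtoC c - RtoC 1) * RtoC fp / RtoC 4.
Proof. intros Hz. unfold coefDt. destruct zeta as [p q]. pose proof (pq_nz _ _ Hz). compsolve; lra. Qed.
Lemma u_nz zeta : zeta <> RtoC 0 -> Ci * zeta <> RtoC 0.
Proof. intros Hz H. apply Hz. destruct zeta as [p q]. unfold Ci, Cmult, RtoC in *. cbn in H. injection H. intros. f_equal; lra. Qed.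

Definition eS (zeta : C) (fz : R) : C := - RtoC (sin fz) / (RtoC 4 * (Ci*zeta)).
Definition edzC (zeta : C) (fz fp : R) : C := RtoC (sin fz) * RtoC fp / (RtoC 8 * (Ci*zeta)).
Definition edzS (zeta : C) (fz fp : R) : C := - RtoC (cos fz) * RtoC fp / (RtoC 4 * (Ci*zeta)).
Definition eWzz c zeta fz fp (x1 x2 : C) : C :=
  let Cc := coefC zeta fz in
  let D := coefD c zeta fz fp in let Dt := coefDt c zeta fz fp in
  let S := eS zeta fz in
  let U := x1*x1 - x2*x2 in let V := x1*x2 in let w := x1*x1+x2*x2 in
  let dzU := RtoC 2*Cc*w + RtoC 2*(D-Dt)*V in let dzV := D*x2*x2 + Dt*x1*x1 in
  RtoC 2*edzC zeta fz fp*U + RtoC 2*Cc*dzU + RtoC 2*edzS zeta fz fp*V + RtoC 2*S*dzV.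
Definition eWzt c zeta fz fp (x1 x2 : C) : C :=
  let A := coefA c zeta fz in
  let B := coefB c zeta fz fp in let Bt := coefBt c zeta fz fp in
  let Cc := coefC zeta fz in
  let S := eS zeta fz in
  let V := x1*x2 in let w := x1*x1+x2*x2 in
  let dtU := RtoC 2*A*w + RtoC 2*(B-Bt)*V in let dtV := B*x2*x2 + Bt*x1*x1 in
  RtoC 2*Cc*dtU + RtoC 2*S*dtV.
Definition eWtt c zeta fz fp (x1 x2 : C) : C :=
  let A := coefA c zeta fz in
  let B := coefB c zeta fz fp in let Bt := coefBt c zeta fz fp in
  let T := RtoC (c-1) * eS zeta fz in
  let V := x1*x2 in let w := x1*x1+x2*x2 in
  let dtU := RtoC 2*A*w + RtoC 2*(B-Bt)*V in let dtV := B*x2*x2 + Bt*x1*x1 in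
  RtoC 2*A*dtU + RtoC 2*T*dtV.

Arguments cd_plus {f g x df dg}.
Arguments cd_minus {f g x df dg}.
Arguments cd_mult {f g x df dg}.

Ltac ucoefs hz :=
  rewrite ?(cA _ _ _ hz), ?(cB _ _ _ _ hz), ?(cBt _ _ _ _ hz), ?(cC _ _ hz), ?(cD _ _ _ _ hz), ?(cDt _ _ _ _ hz);
  unfold eS, edzC, edzS;
  let hu := fresh "hu" in pose proof (u_nz _ hz) as hu;
  revert hu; match type of hz with ?z <> _ => generalize (Ci * z) end; intros.

Lemma rc2 c : RtoC (c ^ 2 - 1) = RtoC c * RtoC c - RtoC 1.
Proof. rewrite RtoC_minus, <- RtoC_mult. f_equal. f_equal. simpl. ring. Qed.

Lemma alg (c fz fp : R) (zeta x1 x2 : C) : zeta <> RtoC 0 ->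
  RtoC (c ^ 2 - 1) * eWzz c zeta fz fp x1 x2 - RtoC 2 * RtoC c * eWzt c zeta fz fp x1 x2
  + eWtt c zeta fz fp x1 x2 + RtoC (cos fz) * (x1*x1+x2*x2) = RtoC 0.
Proof.
  intros Hz.
  unfold eWzz, eWzt, eWtt. ucoefs Hz.
  rewrite rc2, ?RtoC_minus.
  generalize (RtoC (sin fz)) (RtoC (cos fz)) (RtoC c) (RtoC fp). intros.
  field. auto.
Qed.

Lemma RtoC_nz (r : R) : r <> 0%R -> RtoC r <> RtoC 0.
Proof. intros H E. apply H. injection E. auto. Qed.

Ltac fs hz :=
  match goal with |- ?a = ?b => change (@eq C a b) end;
  ucoefs hz; rewrite ?RtoC_minus; field;
  try (repeat split; auto; apply RtoC_nz; lra).
Theorem theorem1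
  (c : R) (hc : c <> 1%R) (f : R -> R)
  (hf1 : forall z : R, ex_derive f z)
  (hf2 : forall z : R, ex_derive (Derive f) z)
  (hode : forall z : R, ((c ^ 2 - 1) * Derive (Derive f) z + sin (f z))%R = 0%R)
  (zeta : C) (hzeta : zeta <> RtoC 0)
  (chi1 chi2 : R -> R -> C)
  (hz1 : forall z t : R, is_derive (fun z' => chi1 z' t) z
     (coefC zeta (f z) * chi1 z t + coefD c zeta (f z) (Derive f z) * chi2 z t))
  (hz2 : forall z t : R, is_derive (fun z' => chi2 z' t) z
     (coefDt c zeta (f z) (Derive f z) * chi1 z t - coefC zeta (f z) * chi2 z t))
  (ht1 : forall z t : R, is_derive (fun t' => chi1 z t') t
     (coefA c zeta (f z) * chi1 z t + coefB c zeta (f z) (Derive f z) * chi2 z t))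
  (ht2 : forall z t : R, is_derive (fun t' => chi2 z t') t
     (coefBt c zeta (f z) (Derive f z) * chi1 z t - coefA c zeta (f z) * chi2 z t)) :
  let w := fun z t : R => chi1 z t * chi1 z t + chi2 z t * chi2 z t in
  exists wz wt : R -> R -> C,
    (forall z t : R, is_derive (fun z' => w z' t) z (wz z t)) /\
    (forall z t : R, is_derive (fun t' => w z t') t (wt z t)) /\
    (forall z t : R, exists wzz wzt wtt : C,
       is_derive (fun z' => wz z' t) z wzz /\
       is_derive (fun t' => wz z t') t wzt /\
       is_derive (fun t' => wt z t') t wtt /\
       RtoC (c ^ 2 - 1) * wzz - RtoC 2 * RtoC c * wzt + wtt + RtoC (cos (f z)) * w z t
         = RtoC 0).
Proof.
  intros w.
  assert (dC : forall z, is_derive (fun y => coefC zeta (f y)) z (edzC zeta (f z) (Derive f z))).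
  { intros z. eapply is_derive_ext.
    { intros y. symmetry. instantiate (1 := fun y => (- (Ci * zeta) / RtoC 2) + (- RtoC 1) / (RtoC 8 * (Ci * zeta)) * RtoC (cos (f y))).
      cbv beta. fs hzeta. }
    eapply dval.
    { eapply cd_plus; [apply cd_const|]. eapply cd_mult; [apply cd_const|].
      apply cd_RtoC. eapply dval. { apply (is_derive_comp cos f); [apply is_derive_cos|]. apply Derive_correct, hf1. }
      instantiate (1 := (- sin (f z) * Derive f z)%R). rewrite Rmult_comm. reflexivity. }
    rewrite RtoC_mult, RtoC_opp. fs hzeta. }
  assert (dS : forall z, is_derive (fun y => eS zeta (f y)) z (edzS zeta (f z) (Derive f z))).
  { intros z. eapply is_derive_ext.
    { intros y. symmetry. instantiate (1 := fun y => (- RtoC 1) / (RtoC 4 * (Ci * zeta)) * RtoC (sin (f y))).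
      cbv beta. fs hzeta. }
    eapply dval.
    { eapply cd_mult; [apply cd_const|].
      apply cd_RtoC. eapply dval. { apply (is_derive_comp sin f); [apply is_derive_sin|]. apply Derive_correct, hf1. }
      instantiate (1 := (cos (f z) * Derive f z)%R). rewrite Rmult_comm. reflexivity. }
    rewrite RtoC_mult. fs hzeta. }
  exists (fun z t => RtoC 2 * coefC zeta (f z) * (chi1 z t * chi1 z t - chi2 z t * chi2 z t)
                     + RtoC 2 * eS zeta (f z) * (chi1 z t * chi2 z t)).
  exists (fun z t => RtoC 2 * coefA c zeta (f z) * (chi1 z t * chi1 z t - chi2 z t * chi2 z t)
                     + RtoC 2 * (RtoC (c-1) * eS zeta (f z)) * (chi1 z t * chi2 z t)).
  split; [|split].
  - intros z t. unfold w. eapply dval.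
    { exact (cd_plus (cd_mult (hz1 z t) (hz1 z t)) (cd_mult (hz2 z t) (hz2 z t))). }
    fs hzeta.
  - intros z t. unfold w. eapply dval.
    { exact (cd_plus (cd_mult (ht1 z t) (ht1 z t)) (cd_mult (ht2 z t) (ht2 z t))). }
    fs hzeta.
  - intros z t.
    exists (eWzz c zeta (f z) (Derive f z) (chi1 z t) (chi2 z t)).
    exists (eWzt c zeta (f z) (Derive f z) (chi1 z t) (chi2 z t)).
    exists (eWtt c zeta (f z) (Derive f z) (chi1 z t) (chi2 z t)).
    split; [|split; [|split]].
    + eapply dval.
      { exact (cd_plus (cd_mult (cd_mult (cd_const (RtoC 2) z) (dC z))
                 (cd_minus (cd_mult (hz1 z t) (hz1 z t)) (cd_mult (hz2 z t) (hz2 z t))))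
               (cd_mult (cd_mult (cd_const (RtoC 2) z) (dS z)) (cd_mult (hz1 z t) (hz2 z t)))). }
      unfold eWzz. fs hzeta.
    + eapply dval.
      { exact (cd_plus (cd_mult (cd_const (RtoC 2 * coefC zeta (f z)) t)
                 (cd_minus (cd_mult (ht1 z t) (ht1 z t)) (cd_mult (ht2 z t) (ht2 z t))))
               (cd_mult (cd_const (RtoC 2 * eS zeta (f z)) t) (cd_mult (ht1 z t) (ht2 z t)))). }
      unfold eWzt. fs hzeta.
    + eapply dval.
      { exact (cd_plus (cd_mult (cd_const (RtoC 2 * coefA c zeta (f z)) t)
                 (cd_minus (cd_mult (ht1 z t) (ht1 z t)) (cd_mult (ht2 z t) (ht2 z t))))
               (cd_mult (cd_const (RtoC 2 * (RtoC (c-1) * eS zeta (f z))) t) (cd_mult (ht1 z t) (ht2 z t)))). }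
      unfold eWtt. fs hzeta.
    + unfold w. apply alg. exact hzeta.
Qed.
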